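(* Let $f>0$, $F>0$, $s\in(0,1]$ with $f+sF>1$, let $0<\Delta<F$, and let $\pi_1\in(0,1)$. Consider the two-class stochastic Leslie model with two environments, $\boldsymbol A_1=\begin{pmatrix} f&F\\ s&0\end{pmatrix}$, $\boldsymbol A_2=\begin{pmatrix} f&F-\Delta\\ s&0\end{pmatrix}$, driven by an i.i.d. environmental sequence with $P(\tau_t=1)=\pi_1$, $P(\tau_t=2)=1-\pi_1$. Then $$\log\lambda_S\ \ge\ \log\rho(\boldsymbol A_1)+(1-\pi_1)\log\Big(1-\frac{\Delta}{F}\Big),$$ and consequently, if $$\Delta<F\Big(1-\rho(\boldsymbol A_1)^{\frac{1}{\pi_1-1}}\Big),\qquad \rho(\boldsymbol A_1)=\frac{f+\sqrt{f^2+4sF}}{2},$$ then $\lambda_S>1$, so the total population tends to infinity with probability one.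
   Context: The stochastic growth rate $\lambda_S$ of $\boldsymbol z(t+1)=\boldsymbol A_{\tau_{t+1}}\boldsymbol z(t)$ (with fixed nonzero $\boldsymbol z(0)\ge0$) is defined by $\log\lambda_S=\lim_{t\to\infty}\frac1t\log\|\boldsymbol z(t)\|_1$ almost surely; $\rho$ denotes spectral radius. *)

(* Defs.v *)
From HB Require Import structures.
From mathcomp Require Import all_boot all_order all_algebra.
From mathcomp Require Import complex.
From mathcomp Require Import all_classical all_reals all_analysis.
Set Implicit Arguments. Unset Strict Implicit. Unset Printing Implicit Defensive.
Import Order.TTheory GRing.Theory Num.Theory.
Import numFieldNormedType.Exports.
Local Open Scope classical_set_scope.
Local Open Scope ring_scope.

Definition spectral_radius (R : realType) (n : nat) (A : 'M[R]_n) : R :=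
  sup [set ComplexField.Normc.normc a | a in [set a : R[i] |
        eigenvalue (map_mx (fun x : R => (x%:C)%C) A) a]].

Definition norm1 (R : realType) (n : nat) (z : 'cV[R]_n) : R :=
  \sum_(i < n) `|z i ord0|.

(* The two environments of the two-class Leslie model; environment 1 is
   encoded by [true], environment 2 by [false]. *)
Definition leslieA (R : realType) (f F s Delta : R) (e : bool) : 'M[R]_2 :=
  \matrix_(i < 2, j < 2)
     (if (i == 0 :> nat) then (if (j == 0 :> nat) then f
                              else (if e then F else F - Delta))
      else (if (j == 0 :> nat) then s else 0)).

(* trajectory z(0) = z0, z(t+1) = A_{env t} z(t); here [env t] is the
   paper's tau_{t+1}. *)
Fixpoint traj (R : realType) (n : nat) (A : bool -> 'M[R]_n) (z0 : 'cV[R]_n)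
  (env : nat -> bool) (t : nat) : 'cV[R]_n :=
  match t with
  | 0 => z0
  | t'.+1 => A (env t') *m traj A z0 env t'
  end.

(* (tau t)_t is an i.i.d. sequence of {1,2}-valued (here bool-valued)
   random variables with P(tau t = 1) = pi1: mutual independence is the
   product rule over every finite family of indices. *)
Definition iid_env (R : realType) (d : measure_display) (Omega : measurableType d)
  (P : probability Omega R) (tau : nat -> Omega -> bool) (pi1 : R) : Prop :=
  (forall t b, measurable [set w | tau t w = b]) /\
  (forall t, P [set w | tau t w = true] = pi1%:E) /\
  (forall (I : seq nat) (v : nat -> bool), uniq I ->
     P (\big[setI/setT]_(t <- I) [set w | tau t w = v t]) =
     (\prod_(t <- I) P [set w | tau t w = v t])%E).

(* Main.v *)
Require Import Defs.
From HB Require Import structures.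
From mathcomp Require Import all_boot all_order all_algebra.
From mathcomp Require Import complex.
From mathcomp Require Import all_classical all_reals all_analysis.
From mathcomp Require Import measurable_realfun.
From mathcomp Require Import ring lra.
Set Implicit Arguments. Unset Strict Implicit. Unset Printing Implicit Defensive.
Import Order.TTheory GRing.Theory Num.Theory.
Import numFieldNormedType.Exports.
Local Open Scope classical_set_scope.
Local Open Scope ring_scope.

Lemma cM (R : realType) (x y : R) : ((x * y)%:C)%C = (x%:C)%C * (y%:C)%C :> R[i].
Proof. by rewrite rmorphM. Qed.
Lemma cD (R : realType) (x y : R) : ((x + y)%:C)%C = (x%:C)%C + (y%:C)%C :> R[i].
Proof. by rewrite rmorphD. Qed.
Lemma c0 (R : realType) : ((0:R)%:C)%C = 0 :> R[i].
Proof. by []. Qed.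
Lemma cneq0 (R : realType) (x : R) : x != 0 -> ((x%:C)%C != 0 :> R[i]).
Proof. by move=> h; apply/eqP=> -[] /eqP; rewrite (negbTE h). Qed.

Lemma eig_A1 (R : realType) (f F s Delta : R) (a : R[i]) : F != 0 -> s != 0 ->
  eigenvalue (map_mx (fun x : R => (x%:C)%C) (leslieA f F s Delta true)) a <->
  a ^+ 2 = (f%:C)%C * a + ((s * F)%:C)%C.
Proof.
move=> F0 s0; have Fc := cneq0 F0; have sc := cneq0 s0.
have w0 : widen_ord (leqnSn 1) ord_max = 0 :> 'I_2 by apply/val_inj.
split.
- move/eigenvalueP=> [v hv vn0].
  move/matrixP: hv => hv.
  have := hv 0 0; have := hv 0 1; rewrite !mxE !big_ord_recr !big_ord0 !mxE /= w0.
  rewrite c0 !add0r mulr0 addr0 => e1 e0.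
  have v00 : v 0 0 != 0.
    apply/negP=> /eqP v00; move/negP: vn0; apply; apply/eqP/rowP=> j.
    rewrite mxE; case: j => -[|[|//]] jl.
      by rewrite -v00; congr (v 0 _); apply/val_inj.
    have : v 0 ord_max * (s%:C)%C = 0.
 by move: e0; rewrite v00 mul0r add0r mulr0.
    move/eqP; rewrite mulf_eq0 (negbTE sc) orbF => /eqP <-.
    by congr (v 0 _); apply/val_inj.
  apply: (mulIf v00).
  have e1' : a * v 0 ord_max = v 0 0 * (F%:C)%C.
    by rewrite e1; congr (a * v 0 _); exact/val_inj.
  rewrite cM expr2 -mulrA -e0 mulrDr.

  have -> : a * (v 0 ord_max * (s%:C)%C) = (a * v 0 ord_max) * (s%:C)%C by ring.
  rewrite e1'; ring.
- move=> ha; apply/eigenvalueP; exists (\row_j (if j == 0 then a else (F%:C)%C)).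
  + apply/rowP=> j; rewrite !mxE !big_ord_recr !big_ord0 !mxE /= ?w0 /=.
    case: j => -[|[|//]] jl /=; rewrite ?mxE /=.
      by rewrite add0r -expr2 ha cM; ring.
    by rewrite c0; ring.
  + apply/negP=> /eqP/rowP/(_ 1); rewrite !mxE /= => /eqP; exact/negP.
Qed.

Lemma normc_real (R : realType) (r : R) : ComplexField.Normc.normc ((r%:C)%C : R[i]) = `|r|.
Proof. by rewrite /= expr0n /= addr0 sqrtr_sqr. Qed.

Lemma specA1 (R : realType) (f F s Delta : R) : 0 < f -> 0 < F -> 0 < s ->
  spectral_radius (leslieA f F s Delta true) = (f + Num.sqrt (f ^+ 2 + 4 * s * F)) / 2.
Proof.
move=> f0 F0 s0.
set q := Num.sqrt _.
have q2 : q ^+ 2 = f ^+ 2 + 4 * s * F by rewrite sqr_sqrtr //; nra.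
have q0 : 0 <= q by apply: sqrtr_ge0.
have qf : f < q by nra.
set r1 := (f + q) / 2; set r2 := (f - q) / 2.
have key : forall a : R[i], eigenvalue (map_mx (fun x : R => (x%:C)%C) (leslieA f F s Delta true)) a <->
    a = (r1%:C)%C \/ a = (r2%:C)%C.
  move=> a; rewrite eig_A1; [|by rewrite gt_eqF|by rewrite gt_eqF].
  have e : (a - (r1%:C)%C) * (a - (r2%:C)%C) = a ^+ 2 - (((r1 + r2)%:C)%C * a - ((r1 * r2)%:C)%C).
    by rewrite cD cM; ring.
  have s12 : r1 + r2 = f by rewrite /r1 /r2; field.
  have p12 : r1 * r2 = - (s * F).
    rewrite /r1 /r2.
    have -> : (f + q) / 2 * ((f - q) / 2) = (f ^+ 2 - q ^+ 2) / 4 by field.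
    by rewrite q2; field.
  rewrite s12 p12 rmorphN /= in e.
  split.
  - move=> ha; have : (a - (r1%:C)%C) * (a - (r2%:C)%C) = 0 by rewrite e ha; ring.
    by move/eqP; rewrite mulf_eq0 !subr_eq0 => /orP[/eqP|/eqP]; [left|right].
  - move=> h; apply/eqP; rewrite -subr_eq0.
    have -> : a ^+ 2 - ((f%:C)%C * a + ((s * F)%:C)%C) = (a - (r1%:C)%C) * (a - (r2%:C)%C)
      by rewrite e; ring.
    by case: h => ->; rewrite subrr ?mul0r ?mulr0.
have r1p : 0 < r1 by rewrite /r1; lra.
have r2n : r2 < 0 by rewrite /r2; lra.
have ub : ubound [set ComplexField.Normc.normc a | a in [set a : R[i] |
        eigenvalue (map_mx (fun x : R => (x%:C)%C) (leslieA f F s Delta true)) a]] r1.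
  move=> x [a /key [->|->] <-]; rewrite normc_real.
    by rewrite gtr0_norm.
  by rewrite ltr0_norm //; rewrite /r1 /r2; lra.
have inE : [set ComplexField.Normc.normc a | a in [set a : R[i] |
        eigenvalue (map_mx (fun x : R => (x%:C)%C) (leslieA f F s Delta true)) a]] r1.
  by exists (r1%:C)%C; [apply/key; left|rewrite normc_real gtr0_norm].
rewrite /spectral_radius; apply/eqP; rewrite eq_le; apply/andP; split.
  by apply: ge_sup => //; exists r1.
by apply: sup_upper_bound => //; split; [exists r1|exists r1].
Qed.


Section Det.
Variables (R : realType) (f F s Delta : R) (z0 : 'cV[R]_2) (env : nat -> bool).
Let z t := traj (leslieA f F s Delta) z0 env t.

Lemma step0 t : z t.+1 0 0 = f * z t 0 0 + (if env t then F else F - Delta) * z t 1 0.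
Proof.
rewrite /z /= !mxE !big_ord_recr big_ord0 /= !mxE /= add0r.
have w0 : widen_ord (leqnSn 1) ord_max = 0 :> 'I_2 by apply/val_inj.
have w1 : ord_max = 1 :> 'I_2 by apply/val_inj.
by rewrite w0 w1.
Qed.

Lemma step1 t : z t.+1 1 0 = s * z t 0 0.
Proof.
rewrite /z /= !mxE !big_ord_recr big_ord0 /= !mxE /= add0r mul0r addr0.
have w0 : widen_ord (leqnSn 1) ord_max = 0 :> 'I_2 by apply/val_inj.
by rewrite w0.
Qed.


End Det.
Definition Nf (env : nat -> bool) t := (\sum_(k < t) (~~ env k : nat))%N.

Lemma NfS env t : Nf env t.+1 = (Nf env t + (~~ env t : nat))%N.
Proof. by rewrite /Nf big_ord_recr. Qed.

Lemma nonneg_traj (R : realType) (f F s Delta : R) (z0 : 'cV[R]_2) env :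
  0 < f -> 0 < F -> 0 < s -> Delta < F -> (forall i, 0 <= z0 i ord0) ->
  forall t, 0 <= traj (leslieA f F s Delta) z0 env t 0 0 /\
            0 <= traj (leslieA f F s Delta) z0 env t 1 0.
Proof.
move=> f0 F0 s0 DF z00; elim=> [|t [h0 h1]]; first by split; apply: z00.
rewrite step0 step1; split; last by apply: mulr_ge0 => //; apply: ltW.
apply: addr_ge0; first by apply: mulr_ge0 => //; apply: ltW.
by apply: mulr_ge0 => //; case: (env t); lra.
Qed.

Lemma pos2 (R : realType) (f F s Delta : R) (z0 : 'cV[R]_2) env :
  0 < f -> 0 < F -> 0 < s -> Delta < F -> (forall i, 0 <= z0 i ord0) -> z0 != 0 ->
  0 < traj (leslieA f F s Delta) z0 env 2 0 0 /\
  0 < traj (leslieA f F s Delta) z0 env 2 1 0.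
Proof.
move=> f0 F0 s0 DF z00 nz.
have [a0 a1] := nonneg_traj env f0 F0 s0 DF z00 0.
rewrite /= in a0 a1.
have x1 : 0 < traj (leslieA f F s Delta) z0 env 1 0 0.
  rewrite step0 /=.
  have Fe : 0 < (if env 0%N then F else F - Delta) by case: (env 0%N); lra.
  have : z0 0 0 != 0 \/ z0 1 0 != 0.
    case: (boolP (z0 0 0 == 0)) => [/eqP e0|]; last by left.
    right; apply/negP => /eqP e1; move/negP: nz; apply; apply/eqP/matrixP => i j.
    rewrite mxE (_ : j = 0); last by apply/val_inj; case: j => -[].
    by case: i => -[|[|//]] il; [rewrite -e0|rewrite -e1]; congr (z0 _ _); apply/val_inj.
  case=> h.
    have : 0 < z0 0 0 by rewrite lt_def h a0.
    by move=> ?; nra.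
  have : 0 < z0 1 0 by rewrite lt_def h a1.
  by move=> ?; nra.
have [b0 b1] := nonneg_traj env f0 F0 s0 DF z00 1.
split; last by rewrite step1; nra.
rewrite step0.
have Fe : 0 < (if env 1%N then F else F - Delta) by case: (env 1%N); lra.
nra.
Qed.

Lemma lowb (R : realType) (f F s Delta : R) (z0 : 'cV[R]_2) env (rho : R) :
  0 < f -> 0 < F -> 0 < s -> 0 < Delta -> Delta < F ->
  (forall i, 0 <= z0 i ord0) -> z0 != 0 ->
  0 < rho -> rho ^+ 2 = f * rho + s * F ->
  exists alpha, 0 < alpha /\ forall n,
    alpha * rho ^+ (n + 2) * (1 - Delta / F) ^+ Nf env (n + 2) * rho
      <= traj (leslieA f F s Delta) z0 env (n + 2) 0 0 /\
    alpha * rho ^+ (n + 2) * (1 - Delta / F) ^+ Nf env (n + 2) * s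
      <= traj (leslieA f F s Delta) z0 env (n + 2) 1 0.
Proof.
move=> f0 F0 s0 D0 DF z00 nz r0 r2.
set c := 1 - Delta / F.
have c0 : 0 < c by rewrite /c subr_gt0 ltr_pdivrMr // mul1r.
have c1 : c <= 1 by rewrite /c lerBlDr lerDl; apply: divr_ge0; apply: ltW.
have cF : F - Delta = c * F by rewrite /c mulrBl mul1r divfK // gt_eqF.
have [p0 p1] := pos2 env f0 F0 s0 DF z00 nz.
set x2 := traj _ _ _ 2 0 0 in p0 *; set y2 := traj _ _ _ 2 1 0 in p1 *.
exists (Num.min (x2 / rho) (y2 / s) / rho ^+ 2).
have m0 : 0 < Num.min (x2 / rho) (y2 / s) by rewrite lt_min !divr_gt0.
split; first by rewrite divr_gt0 // exprn_gt0.
elim=> [|n [ih0 ih1]].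
  have cN : c ^+ Nf env (0 + 2) <= 1 by apply: exprn_ile1; [apply: ltW|].
  have cN0 : 0 <= c ^+ Nf env (0 + 2) by apply: exprn_ge0; apply: ltW.
  rewrite add0n -/x2 -/y2 divfK ?expf_neq0 ?gt_eqF //.
  have h1 : Num.min (x2 / rho) (y2 / s) <= x2 / rho by rewrite ge_min lexx.
  have h2 : Num.min (x2 / rho) (y2 / s) <= y2 / s by rewrite ge_min lexx orbT.
  rewrite ler_pdivlMr // in h1; rewrite ler_pdivlMr // in h2.
  split; nra.
set beta := _ / _ * _ * _ in ih0 ih1.
have b0 : 0 <= beta.
  rewrite /beta; apply: mulr_ge0; [apply: mulr_ge0|apply: exprn_ge0; apply: ltW] => //.
    by apply: ltW; rewrite divr_gt0 // exprn_gt0.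
  by apply: exprn_ge0; apply: ltW.
rewrite addSn NfS.
have e : forall w, Num.min (x2 / rho) (y2 / s) / rho ^+ 2 * rho ^+ (n + 2).+1 *
    c ^+ (Nf env (n + 2) + (~~ env (n + 2) : nat)) * w =
    beta * rho * c ^+ (~~ env (n + 2) : nat) * w.
  by move=> w; rewrite /beta [rho ^+ (n + 2).+1]exprS [c ^+ (_ + _)]exprD; ring.
rewrite !e step0 step1.
move: ih0 ih1; rewrite cF.
have E : beta * rho * rho = beta * f * rho + beta * s * F by rewrite -mulrA -expr2 r2; ring.
have h1 : 0 <= f * beta * rho by apply: mulr_ge0; [apply: mulr_ge0|]; rewrite // ltW.
have h2 : 0 <= s * beta * rho by apply: mulr_ge0; [apply: mulr_ge0|]; rewrite // ltW.
have h3 : 0 <= F * beta * s by apply: mulr_ge0; [apply: mulr_ge0|]; rewrite // ltW.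
case: (env (n + 2)) => /= ih0 ih1; rewrite ?expr0 ?expr1; split; nra.
Qed.

Lemma lnMp (R : realType) (x y : R) : 0 < x -> 0 < y -> ln (x * y) = ln x + ln y.
Proof. by move=> hx hy; apply: lnM; rewrite posrE. Qed.

Lemma lnbound (R : realType) (f F s Delta : R) (z0 : 'cV[R]_2) env (rho : R) :
  0 < f -> 0 < F -> 0 < s -> 0 < Delta -> Delta < F ->
  (forall i, 0 <= z0 i ord0) -> z0 != 0 ->
  0 < rho -> rho ^+ 2 = f * rho + s * F ->
  exists K, forall t, (2 <= t)%N ->
    K + t%:R * ln rho + (Nf env t)%:R * ln (1 - Delta / F)
      <= ln (norm1 (traj (leslieA f F s Delta) z0 env t)).
Proof.
move=> f0 F0 s0 D0 DF z00 nz r0 r2.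
have [al [al0 hal]] := lowb env f0 F0 s0 D0 DF z00 nz r0 r2.
set c := 1 - Delta / F.
have c0 : 0 < c by rewrite /c subr_gt0 ltr_pdivrMr // mul1r.
exists (ln al + ln rho) => t t2.
have [n ->] : exists n, t = (n + 2)%N by exists (t - 2)%N; rewrite subnK.
have [h0 _] := hal n.
set x := traj _ _ _ _ 0 0 in h0 *.
have P0 : 0 < al * rho ^+ (n + 2) * c ^+ Nf env (n + 2) * rho.
  by apply: mulr_gt0 => //; apply: mulr_gt0; [apply: mulr_gt0 => //; apply: exprn_gt0|apply: exprn_gt0].
have xn : x <= norm1 (traj (leslieA f F s Delta) z0 env (n + 2)).
  rewrite /norm1 !big_ord_recr big_ord0 /= add0r.
  rewrite (_ : widen_ord (leqnSn 1) ord_max = 0 :> 'I_2); last by apply/val_inj.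
  rewrite -/x; have := normr_ge0 (traj (leslieA f F s Delta) z0 env (n + 2) ord_max 0).
  have := ler_norm x; lra.
have := le_trans h0 xn => hle.
have Np : 0 < norm1 (traj (leslieA f F s Delta) z0 env (n + 2)) by apply: lt_le_trans hle.
rewrite -(ler_ln (x:=_ * rho) (y:=norm1 _)) ?posrE // in hle.
apply: le_trans hle.
have pr : 0 < rho ^+ (n + 2) by apply: exprn_gt0.
have pc : 0 < c ^+ Nf env (n + 2) by apply: exprn_gt0.
have p1 : 0 < al * rho ^+ (n + 2) by apply: mulr_gt0.
have p2 : 0 < al * rho ^+ (n + 2) * c ^+ Nf env (n + 2) by apply: mulr_gt0.
rewrite -/c.
rewrite (lnMp p2 r0) (lnMp p1 pc) (lnMp al0 pr) (lnXn _ r0) (lnXn _ c0) -[ln rho *+ _]mulr_natl -[ln c *+ _]mulr_natl; lra.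
Qed.

Lemma lim_bound (R : realType) (u : nat -> R) (N : nat -> nat) (K lr lc a L : R) :
  lc <= 0 ->
  (forall t, (2 <= t)%N -> K + t%:R * lr + (N t)%:R * lc <= t%:R * u t) ->
  u @ \oo --> L ->
  (forall T, exists2 t, (T <= t)%N & (N t)%:R <= a * t%:R) ->
  lr + a * lc <= L.
Proof.
move=> lc0 hb cu hN.
rewrite leNgt; apply/negP => hlt.
set eta := (lr + a * lc - L) / 2.
have eta0 : 0 < eta by rewrite /eta divr_gt0 // subr_gt0.
move/cvgrPdist_lt/(_ eta eta0): cu => [T1 _ hT1].
set T2 := (Num.trunc (`|K| / eta)).+1.
have [t ht hNt] := hN (maxn (maxn T1 T2) 2).
rewrite !geq_max in ht; case/andP: ht => /andP[t1 t2] t3.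
have dt := hT1 t t1.
have := hb t t3.
have tK : `|K| < eta * t%:R.
  rewrite mulrC -ltr_pdivrMr //.
  apply: lt_le_trans (truncnS_gt _) _.
  by rewrite ler_nat.
have hK := ler_norm (- K); rewrite normrN in hK.
have hNl : a * t%:R * lc <= (N t)%:R * lc by apply: ler_wnM2r.
have tp : 0 < t%:R :> R by rewrite ltr0n; apply: leq_trans t3.
have du : u t < L + eta by move: dt; rewrite ltr_distlC => /andP[_]; lra.
have du' : t%:R * u t < t%:R * (L + eta) by rewrite ltr_pM2l.
have ee : L + eta = lr + a * lc - eta by rewrite /eta; field.
rewrite ee in du'.
move=> hb'; nra.
Qed.



Section Prob.
Context (R : realType) (d : measure_display) (Omega : measurableType d)
  (P : probability Omega R) (tau : nat -> Omega -> bool) (pi1 : R).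
Hypothesis hiid : iid_env P tau pi1.

Let Fk k := [set w | tau k w = false].
Let mFk k : measurable (Fk k). Proof. by case: hiid => h _; apply: h. Qed.

Lemma gE t w : (Nf (tau^~ w) t)%:R = \sum_(k < t) \1_(Fk k) w :> R.
Proof.
rewrite /Nf natr_sum; apply: eq_bigr => k _.
rewrite indicE /Fk; case E: (tau k w) => /=.
  by rewrite memNset //= E.
by rewrite mem_set.
Qed.

Lemma mg t : measurable_fun setT (fun w => (Nf (tau^~ w) t)%:R : R).
Proof.
rewrite (_ : (fun w => _) = fun w => \sum_(k < t) \1_(Fk k) w); last first.
  by apply/funext => w; rewrite gE.
by apply: measurable_sum => k; apply: measurable_indic.
Qed.

Lemma mD t a : measurable [set w | a < (Nf (tau^~ w) t)%:R :> R].
Proof.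
have := mg t measurableT (measurable_itv `]a, +oo[).
rewrite setTI; congr measurable; apply/seteqP; split => w /=;
  by rewrite in_itv /= andbT.
Qed.

Lemma PFk k : P [set w | tau k w = false] = (1 - pi1)%:E.
Proof.
case: hiid => hm [hp _].
have -> : [set w | tau k w = false] = ~` [set w | tau k w = true].
  by apply/seteqP; split => w; rewrite /Fk /=; case: (tau k w).
by rewrite probability_setC ?hp.
Qed.

Lemma intg t : (\int[P]_(w in setT) ((Nf (tau^~ w) t)%:R)%:E = (t%:R * (1 - pi1))%:E)%E.
Proof.
under eq_integral do rewrite gE -sumEFin.
rewrite ge0_integral_sum //; last first.
  by move=> k; apply/measurable_EFinP; apply: measurable_indic.
under eq_bigr do rewrite integral_indic // setIT.
rewrite (eq_bigr (fun=> (1 - pi1)%:E)); last by move=> k _; exact: PFk.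
by rewrite sumEFin sumr_const card_ord mulr_natl.
Qed.

Lemma markovN t a : 0 < a -> (0 < t)%N ->
  (P [set w | (a * t%:R < (Nf (tau^~ w) t)%:R)%R] <= ((1 - pi1) / a)%:E)%E.
Proof.
move=> a0 t0.
set D := [set w | _ < _].
have mD' : measurable D := mD t (a * t%:R).
have tp : 0 < t%:R :> R by rewrite ltr0n.
have at0 : 0 < a * t%:R by apply: mulr_gt0.
have h : ((a * t%:R)%:E * P D <= (t%:R * (1 - pi1))%:E)%E.
  rewrite -intg -(setIT D) -integral_indic // -ge0_integralZl_EFin //; last 2 first.
  - by apply/measurable_EFinP; apply: measurable_indic.
  - exact: ltW.
  under eq_integral do rewrite -EFinM.
  apply: ge0_le_integral => //.
  - by move=> x _; rewrite lee_fin indicE mulr_ge0 //; apply: ltW.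
  - apply/measurable_EFinP; apply: measurable_funM.
      exact: measurable_cst.
    exact: measurable_indic.
  - by apply/measurable_EFinP; apply: mg.
  move=> x _; rewrite lee_fin indicE.
  case: (boolP (x \in D)) => [|_] /=.
    by rewrite inE /D /= => /ltW; rewrite mulr1.
  by rewrite mulr0.
move: h (measure_ge0 P D) (probability_le1 P mD').
case: (P D) => [r| |] //= h r0 r1.
rewrite lee_fin ler_pdivlMr //.
  move: h; rewrite -EFinM lee_fin => h; nra.
exact: leNye.
Qed.

Lemma exists_good (eps : R) (G : Omega -> Prop) (N : set Omega) :
  0 < pi1 -> pi1 < 1 -> 0 < eps ->
  measurable N -> P N = 0%E -> (forall w, ~ N w -> G w) ->
  exists2 w, G w & forall T, exists2 t, (T <= t)%N &
     (Nf (tau^~ w) t)%:R <= (1 - pi1 + eps) * t%:R.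
Proof.
move=> p0 p1 e0 mN PN hG.
set a := 1 - pi1 + eps.
have a0 : 0 < a by rewrite /a; lra.
set q := (1 - pi1) / a.
have q1 : q < 1 by rewrite /q ltr_pdivrMr // mul1r /a; lra.
case: (pselect (exists2 w, G w & forall T, exists2 t, (T <= t)%N &
     (Nf (tau^~ w) t)%:R <= a * t%:R)) => // nex.
exfalso.
pose H T := [set w | forall t, (T <= t)%N -> a * t%:R < (Nf (tau^~ w) t)%:R].
have HE T : H T = \bigcap_n [set w | a * (T + n)%N%:R < (Nf (tau^~ w) (T + n)%N)%:R].
  apply/seteqP; split => w /= h.
    by move=> n _; apply: h; apply: leq_addr.
  by move=> t Tt; have := h (t - T)%N I; rewrite subnKC.
have mH T : measurable (H T).
  by rewrite HE; apply: bigcapT_measurable => n; apply: mD.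
have sub : ~` N `<=` \bigcup_T H T.
  move=> w /= Nw.
  have Gw := hG w Nw.
  apply: contrapT => hnot.
  apply: nex; exists w => // T.
  apply: contrapT => hT; apply: hnot; exists T => // t Tt /=.
  rewrite ltNge; apply/negP => hle; apply: hT; by exists t.
have PH T : (P (H T) <= q%:E)%E.
  apply: le_trans (markovN a0 (ltn0Sn T)).
  apply: le_measure; rewrite ?inE //; first exact: mD.
  by move=> w /= h; apply: h.
have mU : measurable (\bigcup_T H T) by apply: bigcupT_measurable.
have hom : {homo H : n m / (n <= m)%N >-> (n <= m)%O}.
  move=> n m nm; apply/asboolP => w /= h t mt; apply: h; exact: leq_trans mt.
have cv := nondecreasing_cvg_mu (mu := P) mH mU hom.
have Ule : (P (\bigcup_T H T) <= q%:E)%E.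
  rewrite -(cvg_lim _ cv) //; apply: lime_le; first by apply/cvg_ex; eexists; exact: cv.
  by apply: nearW => T /=; apply: PH.
have Uge : (1 <= P (\bigcup_T H T))%E.
  apply: le_trans (le_measure _ _ _ sub); rewrite ?inE //; last exact: measurableC.
  have PC : P (~` N) = 1%E by rewrite probability_setC // PN sube0.
  by move/eqP: PC; rewrite eq_le => /andP[_ h]; exact: h.
have := le_trans Uge Ule; rewrite lee_fin; lra.
Qed.

End Prob.


Lemma div_lemma (R : realType) (n : nat -> R) (L : R) : 0 < L ->
  (fun t => t%:R^-1 * ln (n t)) @ \oo --> L -> n @ \oo --> +oo.
Proof.
move=> L0 cu; apply/cvgryPge => A.
have L20 : 0 < L / 2 by apply: divr_gt0.
move/cvgrPdist_lt/(_ _ L20): cu => [T _ hT].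
set M := (Num.trunc (`|A| / (L / 2))).+1.
exists (maxn (maxn T M) 1) => // t /=.
rewrite !geq_max => /andP[/andP[tT tM] t1].
have := hT t tT; rewrite /= ltr_distlC => /andP[h _].
have tp : 0 < t%:R :> R by rewrite ltr0n.
have hl : t%:R * (L / 2) < ln (n t).
  have : L / 2 < t%:R^-1 * ln (n t) by lra.
  have e : t%:R * (t%:R^-1 * ln (n t)) = ln (n t) by rewrite mulrA mulfV ?mul1r // gt_eqF.
  move=> h1; nra.
have tA : `|A| < t%:R * (L / 2).
  rewrite -ltr_pdivrMr //; apply: lt_le_trans (truncnS_gt _) _; by rewrite ler_nat.
have lpos : 0 < ln (n t) by apply: lt_trans hl; apply: mulr_gt0.
have np : 0 < n t.
  rewrite ltNge; apply/negP => hn; move: lpos; rewrite ln0 //; lra.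
have := expR_ge1Dx (ln (n t)); rewrite lnK ?posrE //.
have := ler_norm A; lra.
Qed.

Unset Implicit Arguments.

Theorem mainTheorem7 (R : realType) (d : measure_display) (Omega : measurableType d)
  (P : probability Omega R) (tau : nat -> Omega -> bool)
  (f F s Delta pi1 : R) (z0 : 'cV[R]_2) (logLambdaS : R) :
  0 < f -> 0 < F -> 0 < s -> s <= 1 -> 1 < f + s * F ->
  0 < Delta -> Delta < F -> 0 < pi1 -> pi1 < 1 ->
  iid_env P tau pi1 ->
  (forall i, 0 <= z0 i ord0) -> z0 != 0 ->
  (* log lambda_S is the almost sure limit of (1/t) log ||z(t)||_1 *)
  {ae P, forall w, (fun t : nat =>
      (t%:R)^-1 * ln (norm1 (traj (leslieA f F s Delta) z0 (tau^~ w) t)))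
      @ \oo --> logLambdaS} ->
  ln (spectral_radius (leslieA f F s Delta true))
     + (1 - pi1) * ln (1 - Delta / F) <= logLambdaS
  /\ spectral_radius (leslieA f F s Delta true)
       = (f + Num.sqrt (f ^+ 2 + 4 * s * F)) / 2
  /\ (Delta < F * (1 - spectral_radius (leslieA f F s Delta true)
                          `^ ((pi1 - 1)^-1)) ->
      1 < expR logLambdaS /\
      {ae P, forall w, (fun t : nat =>
          norm1 (traj (leslieA f F s Delta) z0 (tau^~ w) t)) @ \oo --> +oo}).
Proof.
move=> f0 F0 s0 s1 fsF D0 DF p0 p1 hiid z00 nz hae.
have hrho := specA1 Delta f0 F0 s0.
set rho := spectral_radius _ in hrho *.
set q := Num.sqrt _ in hrho.
have q2 : q ^+ 2 = f ^+ 2 + 4 * s * F by rewrite sqr_sqrtr //; nra.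
have q0 : 0 <= q by apply: sqrtr_ge0.
have r1 : 1 < rho.
  rewrite hrho; have [f2|f2] := leP 2 f; first by nra.
  have : 2 - f < q by nra.
  lra.
have r0 : 0 < rho by lra.
have r2 : rho ^+ 2 = f * rho + s * F by rewrite hrho; apply/eqP; rewrite -subr_eq0; apply/eqP;
  rewrite -[LHS]/((f + q) / 2 * ((f + q) / 2) - (f * ((f + q) / 2) + s * F)); nra.
set c := 1 - Delta / F.
have c0 : 0 < c by rewrite /c subr_gt0 ltr_pdivrMr // mul1r.
have c1 : c < 1 by rewrite /c ltrBlDr ltrDl divr_gt0.
have lc0 : ln c < 0 by apply: ln_lt0; rewrite c0 c1.
set L := logLambdaS.
have [N [mN PN sub]] := hae.
have good : forall w, ~ N w -> (fun t : nat =>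
      (t%:R)^-1 * ln (norm1 (traj (leslieA f F s Delta) z0 (tau^~ w) t))) @ \oo --> L.
  by move=> w Nw; apply: contrapT => h; apply: Nw; apply: sub.
have part1 : ln rho + (1 - pi1) * ln c <= L.
  have heps : forall eps, 0 < eps -> ln rho + (1 - pi1 + eps) * ln c <= L.
    move=> eps e0.
    have [w gw hw] := exists_good hiid p0 p1 e0 mN PN good.
    have [K hK] := lnbound (tau^~ w) f0 F0 s0 D0 DF z00 nz r0 r2.
    apply: (lim_bound (K := K) _ _ gw hw); first exact: ltW.
    move=> t t2; rewrite mulrA mulfV ?mul1r; first exact: hK.
    by rewrite pnatr_eq0 -lt0n; apply: leq_trans t2.
  rewrite leNgt; apply/negP => hlt.
  set g := ln rho + (1 - pi1) * ln c - L.
  have g0 : 0 < g by rewrite /g subr_gt0.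
  have e0 : 0 < g / (- ln c) / 2 by rewrite !divr_gt0 // oppr_gt0.
  have := heps _ e0.
  have ee : g / (- ln c) / 2 * ln c = - (g / 2) by field; rewrite lt_eqF.
  rewrite mulrDl ee /g; lra.
split => //; split => // hD.
have pw : 0 < rho `^ (pi1 - 1)^-1 by apply: powR_gt0.
have cgt : rho `^ (pi1 - 1)^-1 < c.
  have : Delta / F < 1 - rho `^ (pi1 - 1)^-1 by rewrite ltr_pdivrMr // mulrC.
  rewrite /c; lra.
have lnlt : ln (rho `^ (pi1 - 1)^-1) < ln c by rewrite ltr_ln ?posrE.
rewrite ln_powR in lnlt.
have lr0 : 0 < ln rho by apply: ln_gt0.
have : (1 - pi1) * ((pi1 - 1)^-1 * ln rho) < (1 - pi1) * ln c by rewrite ltr_pM2l // subr_gt0.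
have -> : (1 - pi1) * ((pi1 - 1)^-1 * ln rho) = - ln rho.
  by field; rewrite subr_eq0 lt_eqF.
move=> hh.
have L0 : 0 < L by lra.
split; first by apply: pexpR_gt1.
move: hae; apply: filterS => w; exact: div_lemma.
Qed.
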